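(* Let $m>2$ be a positive integer and let $n,k$ be positive integers. Then: (1) For all $i\in\{0,1,\dots,n-1\}$ and $j\in\{0,1,\dots,k-1\}$, $|\mathrm{WHom}^{ij}(P_m,P_n\square P_k)|=|\mathrm{WHom}^{(n-i-1)j}(P_m,P_n\square P_k)|=|\mathrm{WHom}^{i(k-j-1)}(P_m,P_n\square P_k)|=|\mathrm{WHom}^{(n-i-1)(k-j-1)}(P_m,P_n\square P_k)|$. (2) $|\mathrm{WHom}(P_m,P_{2n}\square P_{2k})|=4\sum_{i=0}^{n-1}\sum_{j=0}^{k-1}|\mathrm{WHom}^{ij}(P_m,P_{2n}\square P_{2k})|$. (3) $|\mathrm{WHom}(P_m,P_{2n+1}\square P_{2k})|=4\sum_{i=0}^{n-1}\sum_{j=0}^{k-1}|\mathrm{WHom}^{ij}(P_m,P_{2n+1}\square P_{2k})|+2\sum_{j=0}^{k-1}|\mathrm{WHom}^{nj}(P_m,P_{2n+1}\square P_{2k})|$. (4) $|\mathrm{WHom}(P_m,P_{2n}\square P_{2k+1})|=4\sum_{i=0}^{n-1}\sum_{j=0}^{k-1}|\mathrm{WHom}^{ij}(P_m,P_{2n}\square P_{2k+1})|+2\sum_{i=0}^{n-1}|\mathrm{WHom}^{ik}(P_m,P_{2n}\square P_{2k+1})|$. (5) $|\mathrm{WHom}(P_m,P_{2n+1}\square P_{2k+1})|=4\sum_{i=0}^{n-1}\sum_{j=0}^{k-1}|\mathrm{WHom}^{ij}(P_m,P_{2n+1}\square P_{2k+1})|+2\sum_{j=0}^{k-1}|\mathrm{WHom}^{nj}(P_m,P_{2n+1}\square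 P_{2k+1})|+2\sum_{i=0}^{n-1}|\mathrm{WHom}^{ik}(P_m,P_{2n+1}\square P_{2k+1})|+|\mathrm{WHom}^{nk}(P_m,P_{2n+1}\square P_{2k+1})|$.
   Context: For a positive integer $n$, $P_n$ denotes the path with vertex set $\{0,1,\dots,n-1\}$ and edge set $\{\{i,i+1\} : i=0,\dots,n-2\}$. The Cartesian product $P_n\square P_k$ has vertex set $\{0,\dots,n-1\}\times\{0,\dots,k-1\}$, with $\{(a,u),(b,v)\}$ an edge iff either $a=b$ and $\{u,v\}\in E(P_k)$, or $\{a,b\}\in E(P_n)$ and $u=v$. A weak homomorphism from a graph $G$ to a graph $H$ is a map $f:V(G)\to V(H)$ such that for every edge $\{x,y\}\in E(G)$, either $f(x)=f(y)$ or $\{f(x),f(y)\}\in E(H)$. $\mathrm{WHom}(G,H)$ is the set of weak homomorphisms from $G$ to $H$, and $\mathrm{WHom}^{ij}(P_m,P_n\square P_k)$ is the set of those $f\in\mathrm{WHom}(P_m,P_n\square P_k)$ with $f(0)=(i,j)$. *)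

(* Defs.v *)
From mathcomp Require Import all_boot.
Set Implicit Arguments. Unset Strict Implicit. Unset Printing Implicit Defensive.

(* Graphs are represented by a (symmetric, irreflexive) edge relation on a finType. *)

Definition path_adj (n : nat) : rel 'I_n :=
  fun a b => (a.+1 == b :> nat) || (b.+1 == a :> nat).

Definition box_adj (T U : finType) (eG : rel T) (eH : rel U) : rel (T * U) :=
  fun x y => ((x.1 == y.1) && eH x.2 y.2) || (eG x.1 y.1 && (x.2 == y.2)).

Definition WHom (T U : finType) (eG : rel T) (eH : rel U) : {set {ffun T -> U}} :=
  [set f : {ffun T -> U} | [forall x, forall y, eG x y ==> ((f x == f y) || eH (f x) (f y))]].

Definition grid_adj (n k : nat) : rel ('I_n * 'I_k) := box_adj (@path_adj n) (@path_adj k).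

Definition WHomPG (m n k : nat) : {set {ffun 'I_m -> 'I_n * 'I_k}} :=
  WHom (@path_adj m) (@grid_adj n k).

(* WHom^{ij}(P_m, P_n □ P_k): those f with f(0) = (i,j); vertex 0 of P_m exists since m>0,
   for m = 0 the set is empty. i, j given as naturals. *)
Definition WHomij (m n k i j : nat) : {set {ffun 'I_m -> 'I_n * 'I_k}} :=
  [set f in WHomPG m n k | [exists x : 'I_m, (x == 0 :> nat) && (((f x).1 : nat) == i) && (((f x).2 : nat) == j)]].

(* Main.v *)
Require Import Defs.
From mathcomp Require Import all_boot zify.

Lemma sum_even (h : nat -> nat) n :
  (forall a, a < 2 * n -> h a = h (2 * n - a - 1)) ->
  \sum_(0 <= a < 2 * n) h a = 2 * \sum_(0 <= a < n) h a.
Proof.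
move=> Hs.
rewrite (big_cat_nat _ (n:=n)) //=; last by lia.
rewrite -{2}(add0n n) big_addn.
have -> : 2 * n - n = n by lia.
have -> : \sum_(0 <= a < n) h (a + n) = \sum_(0 <= a < n) h (0 + n - a.+1).
  apply: eq_big_nat => a /andP[_ ha]; rewrite Hs; last by lia.
  congr h; lia.
rewrite -(big_nat_rev _ _ 0 n (fun _ => true) h) mul2n -addnn; reflexivity.
Qed.

Lemma sum_odd (h : nat -> nat) n :
  (forall a, a < 2 * n + 1 -> h a = h (2 * n + 1 - a - 1)) ->
  \sum_(0 <= a < 2 * n + 1) h a = 2 * \sum_(0 <= a < n) h a + h n.
Proof.
move=> Hs.
rewrite (big_cat_nat _ (n:=n)) //=; last by lia.
rewrite (big_cat_nat _ (n:=n.+1) (m:=n)) //=; last by lia.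
rewrite big_nat1.
rewrite -{1}(add0n n.+1) big_addn.
have -> : 2 * n + 1 - n.+1 = n by lia.
have -> : \sum_(0 <= a < n) h (a + n.+1) = \sum_(0 <= a < n) h (0 + n - a.+1).
  apply: eq_big_nat => a /andP[_ ha]; rewrite Hs; last by lia.
  congr h; lia.
rewrite -(big_nat_rev _ _ 0 n (fun _ => true) h) mul2n -addnn [h n + _]addnC addnA; reflexivity.
Qed.

Section S.
Variables (m' N K : nat).

Definition Aset (p : 'I_N * 'I_K) : {set {ffun 'I_m'.+1 -> 'I_N * 'I_K}} :=
  [set f in WHomPG m'.+1 N K | f ord0 == p].

Lemma WHomij_A (a : 'I_N) (b : 'I_K) : WHomij m'.+1 N K a b = Aset (a, b).
Proof.
apply/setP => f; rewrite !inE; congr (_ && _).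
apply/existsP/eqP.
- case=> x /andP[/andP[x0 h1] h2].
  have -> : ord0 = x by apply/val_inj; rewrite /= (eqP x0).
  case: (f x) h1 h2 => u v /= h1 h2; congr pair; apply/val_inj; exact/eqP.
- move=> e; exists ord0; by rewrite e /= !eqxx.
Qed.

Lemma card_WHomPG : #|WHomPG m'.+1 N K| = \sum_p #|Aset p|.
Proof.
rewrite -sum1_card (partition_big (fun f : {ffun 'I_m'.+1 -> 'I_N * 'I_K} => f ord0) xpredT) //=.
apply: eq_bigr => p _; rewrite -sum1_card; apply: eq_bigl => f.
by rewrite !inE.
Qed.

Lemma card_sym (g : 'I_N * 'I_K -> 'I_N * 'I_K) :
  involutive g -> (forall u v, grid_adj u v -> grid_adj (g u) (g v)) ->
  forall p, #|Aset p| = #|Aset (g p)|.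
Proof.
move=> ginv gadj.
pose phi (f : {ffun 'I_m'.+1 -> 'I_N * 'I_K}) := [ffun x => g (f x)].
have phiK : involutive phi by move=> f; apply/ffunP => x; rewrite !ffunE ginv.
have sub : forall p, phi @: Aset p \subset Aset (g p).
  move=> p; apply/subsetP => _ /imsetP[f Hf ->].
  move: Hf; rewrite !inE ffunE => /andP[Hw /eqP ->]; rewrite eqxx andbT.
  apply/forallP => x; apply/forallP => y; apply/implyP => exy.
  move/forallP: Hw => /(_ x) /forallP /(_ y) /implyP /(_ exy) /orP [/eqP e|a].
    by rewrite !ffunE e eqxx.
  by rewrite !ffunE gadj ?orbT.
have le : forall p, #|Aset p| <= #|Aset (g p)|.
  move=> p; rewrite -(card_imset _ (can_inj phiK)); exact: subset_leq_card.
move=> p; apply/eqP; rewrite eqn_leq le /=.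
by have := le (g p); rewrite ginv.
Qed.

End S.

Lemma path_adj_rev n (a b : 'I_n) : path_adj a b -> path_adj (rev_ord a) (rev_ord b).
Proof.
rewrite /path_adj /= => /orP[/eqP e|/eqP e]; apply/orP; [right|left]; apply/eqP;
  have := ltn_ord a; have := ltn_ord b; lia.
Qed.

Lemma gx_adj N K (u v : 'I_N * 'I_K) :
  grid_adj u v -> grid_adj (rev_ord u.1, u.2) (rev_ord v.1, v.2).
Proof.
rewrite /grid_adj /box_adj /= => /orP[/andP[/eqP e h]|/andP[h e]]; apply/orP.
  by left; rewrite e eqxx h.
by right; rewrite e path_adj_rev.
Qed.

Lemma gy_adj N K (u v : 'I_N * 'I_K) :
  grid_adj u v -> grid_adj (u.1, rev_ord u.2) (v.1, rev_ord v.2).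
Proof.
rewrite /grid_adj /box_adj /= => /orP[/andP[e h]|/andP[h /eqP e]]; apply/orP.
  by left; rewrite e path_adj_rev.
by right; rewrite e eqxx h.
Qed.

Lemma Hsym m' N K a b : a < N -> b < K ->
  #|WHomij m'.+1 N K a b| = #|WHomij m'.+1 N K (N - a - 1) b| /\
  #|WHomij m'.+1 N K a b| = #|WHomij m'.+1 N K a (K - b - 1)|.
Proof.
move=> ha hb.
have E1 : N - a - 1 = rev_ord (Ordinal ha) by rewrite /=; lia.
have E2 : K - b - 1 = rev_ord (Ordinal hb) by rewrite /=; lia.
rewrite E1 E2.
have W : forall (x : 'I_N) (y : 'I_K), WHomij m'.+1 N K x y = Aset m' N K (x, y).
  by move=> x y; apply: WHomij_A.
rewrite (W (Ordinal ha) (Ordinal hb)) (W (rev_ord (Ordinal ha)) (Ordinal hb)).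
rewrite (W (Ordinal ha) (rev_ord (Ordinal hb))); split.
- apply: (@card_sym m' N K (fun u => (rev_ord u.1, u.2))).
  + by case=> x y /=; rewrite rev_ordK.
  + exact: gx_adj.
- apply: (@card_sym m' N K (fun u => (u.1, rev_ord u.2))).
  + by case=> x y /=; rewrite rev_ordK.
  + exact: gy_adj.
Qed.

Lemma total m' N K : #|WHomPG m'.+1 N K| =
  \sum_(0 <= a < N) \sum_(0 <= b < K) #|WHomij m'.+1 N K a b|.
Proof.
rewrite card_WHomPG big_mkord.
rewrite -(pair_big xpredT xpredT (fun (a : 'I_N) (b : 'I_K) => #|@Aset m' N K (a, b)|)) /=.
apply: eq_bigr => a _; rewrite big_mkord; apply: eq_bigr => b _.
by rewrite WHomij_A.
Qed.

Theorem lemma1 (m n k : nat) (hm : 2 < m) (hn : 0 < n) (hk : 0 < k) :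
  (forall i j : nat, i < n -> j < k ->
     #|WHomij m n k i j| = #|WHomij m n k (n - i - 1) j| /\
     #|WHomij m n k (n - i - 1) j| = #|WHomij m n k i (k - j - 1)| /\
     #|WHomij m n k i (k - j - 1)| = #|WHomij m n k (n - i - 1) (k - j - 1)|) /\
  #|WHomPG m (2 * n) (2 * k)| =
     4 * \sum_(0 <= i < n) \sum_(0 <= j < k) #|WHomij m (2 * n) (2 * k) i j| /\
  #|WHomPG m (2 * n + 1) (2 * k)| =
     4 * \sum_(0 <= i < n) \sum_(0 <= j < k) #|WHomij m (2 * n + 1) (2 * k) i j|
     + 2 * \sum_(0 <= j < k) #|WHomij m (2 * n + 1) (2 * k) n j| /\
  #|WHomPG m (2 * n) (2 * k + 1)| =
     4 * \sum_(0 <= i < n) \sum_(0 <= j < k) #|WHomij m (2 * n) (2 * k + 1) i j|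
     + 2 * \sum_(0 <= i < n) #|WHomij m (2 * n) (2 * k + 1) i k| /\
  #|WHomPG m (2 * n + 1) (2 * k + 1)| =
     4 * \sum_(0 <= i < n) \sum_(0 <= j < k) #|WHomij m (2 * n + 1) (2 * k + 1) i j|
     + 2 * \sum_(0 <= j < k) #|WHomij m (2 * n + 1) (2 * k + 1) n j|
     + 2 * \sum_(0 <= i < n) #|WHomij m (2 * n + 1) (2 * k + 1) i k|
     + #|WHomij m (2 * n + 1) (2 * k + 1) n k|.
Proof.
case: m hm => [|m'] // hm.
have Hx := fun N K a b ha hb => (@Hsym m' N K a b ha hb).1.
have Hy := fun N K a b ha hb => (@Hsym m' N K a b ha hb).2.
split.
  move=> i j hi hj.
  have hj' : k - j - 1 < k by lia.
  rewrite -(Hx _ _ _ _ hi hj) -(Hy _ _ _ _ hi hj) -(Hx _ _ _ _ hi hj') -(Hy _ _ _ _ hi hj); done.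
split.
  rewrite total.
  have -> : \sum_(0 <= a < 2 * n) \sum_(0 <= b < 2 * k) #|WHomij m'.+1 (2 * n) (2 * k) a b|
     = \sum_(0 <= a < 2 * n) 2 * \sum_(0 <= b < k) #|WHomij m'.+1 (2 * n) (2 * k) a b|.
    apply: eq_big_nat => a /andP[_ ha]; apply: sum_even => b hb; exact: Hy.
  rewrite sum_even; first by rewrite -big_distrr /=; lia.
  move=> a ha; congr (_ * _); apply: eq_big_nat => b /andP[_ hb]; apply: Hx => //; lia.
split.
  rewrite total.
  have -> : \sum_(0 <= a < 2 * n + 1) \sum_(0 <= b < 2 * k) #|WHomij m'.+1 (2 * n + 1) (2 * k) a b|
     = \sum_(0 <= a < 2 * n + 1) 2 * \sum_(0 <= b < k) #|WHomij m'.+1 (2 * n + 1) (2 * k) a b|.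
    apply: eq_big_nat => a /andP[_ ha]; apply: sum_even => b hb; exact: Hy.
  rewrite sum_odd; first by rewrite -big_distrr /=; lia.
  move=> a ha; congr (_ * _); apply: eq_big_nat => b /andP[_ hb]; apply: Hx => //; lia.
split.
  rewrite total.
  have -> : \sum_(0 <= a < 2 * n) \sum_(0 <= b < 2 * k + 1) #|WHomij m'.+1 (2 * n) (2 * k + 1) a b|
     = \sum_(0 <= a < 2 * n) (2 * \sum_(0 <= b < k) #|WHomij m'.+1 (2 * n) (2 * k + 1) a b|
                              + #|WHomij m'.+1 (2 * n) (2 * k + 1) a k|).
    apply: eq_big_nat => a /andP[_ ha]; apply: sum_odd => b hb; exact: Hy.
  rewrite sum_even; first by rewrite big_split /= -big_distrr /= mulnDr; lia.
  move=> a ha; congr (_ * _ + _).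
    apply: eq_big_nat => b /andP[_ hb]; apply: Hx => //; lia.
  apply: Hx => //; lia.
rewrite total.
have -> : \sum_(0 <= a < 2 * n + 1) \sum_(0 <= b < 2 * k + 1) #|WHomij m'.+1 (2 * n + 1) (2 * k + 1) a b|
   = \sum_(0 <= a < 2 * n + 1) (2 * \sum_(0 <= b < k) #|WHomij m'.+1 (2 * n + 1) (2 * k + 1) a b|
                            + #|WHomij m'.+1 (2 * n + 1) (2 * k + 1) a k|).
  apply: eq_big_nat => a /andP[_ ha]; apply: sum_odd => b hb; exact: Hy.
rewrite sum_odd; first by rewrite big_split /= -big_distrr /= mulnDr; lia.
move=> a ha; congr (_ * _ + _).
  apply: eq_big_nat => b /andP[_ hb]; apply: Hx => //; lia.
apply: Hx => //; lia.
Qed.
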